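(* Let $G$ be a maximal triangle-free graph on $n$ vertices with chromatic number $k$ and maximum degree $d$, and let $v$ be a vertex of maximum degree. Let $G'$ be the subgraph of $G$ induced by $V(G)\setminus(N(v)\cup\{v\})$. Then $G'$ is a triangle-free graph on $n-d-1$ vertices with maximum degree at most $d-1$, and its chromatic number is $k-1$ or $k$.
   Context: All graphs are finite, simple and undirected. A graph is triangle-free if it has no cycle of length $3$. A maximal triangle-free (mtf) graph is a triangle-free graph such that adding any new edge between two non-adjacent vertices creates a triangle. $N(v)$ denotes the set of neighbours of $v$. *)

(* Defs.v *)
From mathcomp Require Import all_boot.
Set Implicit Arguments. Unset Strict Implicit. Unset Printing Implicit Defensive.

Definition simple_graph (T : finType) (e : rel T) : Prop :=
  symmetric e /\ irreflexive e.

Definition triangle_free (T : finType) (e : rel T) : Prop :=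
  forall x y z, ~ [&& e x y, e y z & e z x].

(* maximal triangle-free: triangle-free, and adding any edge between two
   distinct non-adjacent vertices creates a triangle, i.e. they have a common
   neighbour. *)
Definition maximal_triangle_free (T : finType) (e : rel T) : Prop :=
  triangle_free e /\
  forall x y, x != y -> ~~ e x y -> exists z, e x z && e z y.

Definition nbhd (T : finType) (e : rel T) (v : T) : {set T} := [set y | e v y].

Definition degree (T : finType) (e : rel T) (v : T) : nat := #|nbhd e v|.

Definition max_degree (T : finType) (e : rel T) : nat := \max_(v : T) degree e v.

Definition proper_colouring (T : finType) (e : rel T) (k : nat)
  (c : T -> 'I_k) : Prop := forall x y, e x y -> c x != c y.

Definition colourable (T : finType) (e : rel T) (k : nat) : Prop :=
  exists c : T -> 'I_k, proper_colouring e c.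

Definition chromatic_number (T : finType) (e : rel T) (k : nat) : Prop :=
  colourable e k /\ forall j, colourable e j -> k <= j.

Definition induced_vertices (T : finType) (S : {set T}) : finType :=
  {x : T | x \in S}.

Arguments induced_vertices {T} S.
Definition induced_rel (T : finType) (e : rel T) (S : {set T}) :
  rel (induced_vertices S) := fun x y => e (val x) (val y).
Arguments induced_rel {T} e S _ _.

(* Main.v *)
Require Import Defs.
From Stdlib Require Import Classical.
From mathcomp Require Import all_boot zify.
Set Implicit Arguments. Unset Strict Implicit. Unset Printing Implicit Defensive.

Lemma colourable_widen (T : finType) (e : rel T) j m :
  colourable e j -> j <= m -> colourable e m.
Proof.
move=> [c hc] hjm; exists (fun x => widen_ord hjm (c x)) => x y exy.
by have := hc x y exy; apply: contra => /eqP [] h; apply/eqP/val_inj.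
Qed.

Theorem proposition1 (T : finType) (e : rel T) (k d : nat) (v : T) :
  simple_graph e ->
  maximal_triangle_free e ->
  chromatic_number e k ->
  max_degree e = d ->
  degree e v = d ->
  d.+1 < #|T| ->
  let S := ~: (v |: nbhd e v) in
  let G' := induced_rel e S in
  [/\ simple_graph G',
      triangle_free G',
      #|{: induced_vertices S}| = #|T| - d - 1,
      (forall x, degree G' x <= d - 1) &
      (chromatic_number G' (k - 1) \/ chromatic_number G' k)].
Proof.
move=> [esym eirr] [etf emax] [[c hc] kmin] hmax hv hT S G'.
have vN : v \notin nbhd e v by rewrite inE eirr.
have cardS : #|S| = #|T| - d - 1.
  by rewrite /S cardsCs setCK cardsU1 vN (hv : #|nbhd e v| = d) add1n subnS -subn1.
have inS x : (x \in S) = (x != v) && ~~ e v x.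
  by rewrite !inE negb_or.
have cardsub : #|{: induced_vertices S}| = #|S| by rewrite card_sig.
split.
- split => [x y|x]; [exact: esym | exact: eirr].
- move=> x y z; exact: (etf (val x) (val y) (val z)).
- by rewrite cardsub.
- move=> x; have := proj2_sig x; rewrite inS => /andP [xv nvx].
  have [z /andP [xz zv]] : exists z, e (val x) z && e z v.
    by apply: emax; rewrite // esym.
  have zN : z \in nbhd e (val x) by rewrite inE.
  rewrite /degree -(card_imset _ val_inj).
  apply: (@leq_trans #|nbhd e (val x) :\ z|).
    apply: subset_leq_card; apply/subsetP => y /imsetP [w]; rewrite inE => hw ->.
    rewrite !inE; move: hw; rewrite /G' /induced_rel => ->; rewrite andbT; apply/eqP => wz.
    have := proj2_sig w; rewrite inS wz esym zv; by case/andP.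
  have := cardsD1 z (nbhd e (val x)); rewrite zN add1n => hcd.
  have hd : degree e (val x) <= d by rewrite -hmax; exact: (leq_bigmax_cond (val x)).
  move: hd; rewrite /degree hcd; lia.
have Sne : 0 < #|{: induced_vertices S}| by rewrite cardsub cardS; lia.
have [y0 _] : exists y0 : induced_vertices S, True.
  by move: Sne => /card_gt0P [y _]; exists y.
have ext j : colourable G' j -> k <= j.+1.
  move=> [c' hc']; apply: kmin.
  have j0 : 0 < j.
    case: (c' y0) => m; lia.
  pose f x := if (insub x : option (induced_vertices S)) is Some y
    then widen_ord (leqnSn j) (c' y)
    else if x == v then Ordinal (ltn0Sn j) else @ord_max j.
  have fS x (h : x \in S) : f x = widen_ord (leqnSn j) (c' (Sub x h)).
    by rewrite /f insubT.
  have fN x : x \notin S -> f x = if x == v then Ordinal (ltn0Sn j) else @ord_max j.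
    by move=> h; rewrite /f insubF //; apply/negbTE.
  have key x y : e x y -> x \in S -> y \notin S -> f x != f y.
    move=> exy hx hy; rewrite (fS x hx) (fN y hy).
    have := hx; rewrite inS => /andP [xv nvx].
    have yv : y != v by apply: contraNneq nvx => <-; rewrite esym.
    rewrite (negbTE yv); apply/eqP => /(congr1 val) /=.
    case: (c' _) => m /=; lia.
  exists f => x y exy.
  case: (boolP (x \in S)) => hx; case: (boolP (y \in S)) => hy.
  - rewrite (fS x hx) (fS y hy); have := hc' (Sub x hx) (Sub y hy) exy.
    by apply: contra => /eqP /(congr1 val) /= h; apply/eqP/val_inj.
  - exact: key.
  - by rewrite eq_sym; apply: key; rewrite // esym.
  - rewrite (fN x hx) (fN y hy).
    move: hx hy; rewrite !inS !negb_and !negbK.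
    case: (eqVneq x v) => [xv|xv] /=; case: (eqVneq y v) => [yv|yv] /=.
    + by subst; rewrite eirr in exy.
    + move=> _ _; apply/eqP => /(congr1 val) /=; lia.
    + move=> _ _; apply/eqP => /(congr1 val) /=; lia.
    + move=> vx vy; exfalso; apply: (etf v x y); rewrite vx exy /=; by rewrite esym.
have colk : colourable G' k.
  exists (fun x => c (val x)) => x y; exact: hc.
have k0 : 0 < k.
  move: colk => [c' _]; case: (c' y0) => m; lia.
case: (classic (colourable G' (k - 1))) => hk1.
- left; split => // j cj.
  have := ext j cj; lia.
- right; split => // j cj; case: (leqP k j) => // hjk.
  exfalso; apply: hk1; apply: colourable_widen cj _; lia.
Qed.
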